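(* For every integer $n\ge2$, $B(n+2)\ge 2B(n)+1$.
   Context: Fix a field $\mathbb{F}$. All algebras are finite-dimensional, unital, not necessarily associative $\mathbb{F}$-algebras. For a finite generating set $S$ of an algebra $\mathcal{A}$, a word in $S$ is any product (with any bracketing) of finitely many elements of $S$; its length is the number of factors, and $1$ is a word of length $0$. $L_i(S)$ is the linear span of all words in $S$ of length at most $i$. The length of $S$ is $l(S)=\min\{k\ge0: L_k(S)=\mathcal{A}\}$, and $l(\mathcal{A})=\max\{l(S): S\text{ a finite generating set of }\mathcal{A}\}$. For a natural number $n\ge2$, $B(n)$ denotes the maximal integer $l>0$ such that for every $j\in\{1,\ldots,l\}$ there exists an algebra of dimension $n$ and length $j$. *)

(* Defs.v *)
From HB Require Import structures.
From mathcomp Require Import all_boot all_order all_algebra.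
Set Implicit Arguments. Unset Strict Implicit. Unset Printing Implicit Defensive.
Import GRing.Theory.
Local Open Scope ring_scope.

(* An n-dimensional unital, not necessarily associative F-algebra is modelled
   on the n-dimensional F-vector space 'rV[F]_n, with a bilinear product
   [mul] and a two-sided unit [one]. *)
Definition is_unital_algebra (F : fieldType) (n : nat)
  (mul : 'rV[F]_n -> 'rV[F]_n -> 'rV[F]_n) (one : 'rV[F]_n) : Prop :=
  [/\ (forall (a : F) u v w, mul (a *: u + v) w = a *: mul u w + mul v w),
      (forall (a : F) u v w, mul w (a *: u + v) = a *: mul w u + mul w v),
      (forall u, mul one u = u) & (forall u, mul u one = u)].

Inductive is_word (F : fieldType) (n : nat)
  (mul : 'rV[F]_n -> 'rV[F]_n -> 'rV[F]_n) (one : 'rV[F]_n)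
  (S : seq 'rV[F]_n) : nat -> 'rV[F]_n -> Prop :=
  | word_one : is_word mul one S 0 one
  | word_gen : forall s, s \in S -> is_word mul one S 1 s
  | word_mul : forall a b u w, is_word mul one S a u -> is_word mul one S b w ->
               is_word mul one S (a + b)%N (mul u w).

Definition in_L (F : fieldType) (n : nat)
  (mul : 'rV[F]_n -> 'rV[F]_n -> 'rV[F]_n) (one : 'rV[F]_n)
  (S : seq 'rV[F]_n) (i : nat) (v : 'rV[F]_n) : Prop :=
  exists (ws : seq 'rV[F]_n) (cs : seq F),
    [/\ size cs = size ws,
        (forall w, w \in ws -> exists2 k, (k <= i)%N & is_word mul one S k w) &
        v = \sum_(k < size ws) cs`_k *: ws`_k].

Definition L_full (F : fieldType) (n : nat)
  (mul : 'rV[F]_n -> 'rV[F]_n -> 'rV[F]_n) (one : 'rV[F]_n)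
  (S : seq 'rV[F]_n) (i : nat) : Prop :=
  forall v, in_L mul one S i v.

Definition set_length (F : fieldType) (n : nat)
  (mul : 'rV[F]_n -> 'rV[F]_n -> 'rV[F]_n) (one : 'rV[F]_n)
  (S : seq 'rV[F]_n) (k : nat) : Prop :=
  L_full mul one S k /\ (forall k', L_full mul one S k' -> (k <= k')%N).

Definition alg_length (F : fieldType) (n : nat)
  (mul : 'rV[F]_n -> 'rV[F]_n -> 'rV[F]_n) (one : 'rV[F]_n) (l : nat) : Prop :=
  (exists S, set_length mul one S l) /\
  (forall S k, set_length mul one S k -> (k <= l)%N).

Definition realizable (F : fieldType) (n j : nat) : Prop :=
  exists (mul : 'rV[F]_n -> 'rV[F]_n -> 'rV[F]_n) (one : 'rV[F]_n),
    is_unital_algebra mul one /\ alg_length mul one j.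

Definition is_B (F : fieldType) (n b : nat) : Prop :=
  [/\ (0 < b)%N,
      (forall j, (1 <= j <= b)%N -> realizable F n j) &
      (forall b', (0 < b')%N -> (forall j, (1 <= j <= b')%N -> realizable F n j) ->
         (b' <= b)%N)].

(* Main.v *)
Require Import Defs.
From mathcomp Require Import all_boot all_order all_algebra.
From Stdlib Require Import Classical ClassicalEpsilon.
Set Implicit Arguments. Unset Strict Implicit. Unset Printing Implicit Defensive.
From mathcomp Require Import zify.
Import GRing.Theory.
Local Open Scope ring_scope.

Section Gen.
Variables (F : fieldType) (n : nat).
Variables (mul : 'rV[F]_n -> 'rV[F]_n -> 'rV[F]_n) (one : 'rV[F]_n) (S : seq 'rV[F]_n).
Hypothesis Hmul : is_unital_algebra mul one.

Local Notation L := (in_L mul one S).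
Local Notation word := (is_word mul one S).

Lemma in_L0 i : L i 0.
Proof. by exists [::], [::]; split => //; rewrite big_ord0. Qed.

Lemma in_Lword i k w : (k <= i)%N -> word k w -> L i w.
Proof.
move=> ki Hw; exists [:: w], [:: 1]; split => //.
  by move=> x; rewrite inE => /eqP ->; exists k.
by rewrite big_ord1 /= scale1r.
Qed.

Lemma in_LD i x y : L i x -> L i y -> L i (x + y).
Proof.
move=> [ws1 [cs1 [s1 w1 ->]]] [ws2 [cs2 [s2 w2 ->]]].
exists (ws1 ++ ws2), (cs1 ++ cs2); split.
- by rewrite !size_cat s1 s2.
- by move=> w; rewrite mem_cat => /orP [/w1|/w2].
rewrite size_cat big_split_ord /=; congr (_ + _); apply: eq_bigr => k _ /=.
  by rewrite !nth_cat s1 ltn_ord.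
by rewrite !nth_cat s1 ltnNge leq_addr /= addKn.
Qed.

Lemma in_LZ i a x : L i x -> L i (a *: x).
Proof.
move=> [ws [cs [s w ->]]]; exists ws, (map (fun c => a * c) cs); split => //.
  by rewrite size_map.
rewrite scaler_sumr; apply: eq_bigr => k _.
by rewrite (nth_map 0) ?s ?ltn_ord // scalerA.
Qed.

Lemma in_L_mono i j x : (i <= j)%N -> L i x -> L j x.
Proof.
move=> ij [ws [cs [s w ->]]]; exists ws, cs; split => // v /w [k ki Hk].
by exists k => //; apply: leq_trans ij.
Qed.

Lemma in_L_ind (P : 'rV[F]_n -> Prop) i :
  P 0 -> (forall x y, P x -> P y -> P (x + y)) -> (forall a x, P x -> P (a *: x)) ->
  (forall k w, (k <= i)%N -> word k w -> P w) -> forall v, L i v -> P v.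
Proof.
move=> P0 PD PZ Pw v [ws [cs [s w ->]]].
apply: (big_ind P) => // k _; apply: PZ.
have /w [k' k'i Hk] : ws`_k \in ws by apply: mem_nth.
exact: Pw Hk.
Qed.

Lemma in_L_sum i (N : nat) (f : 'I_N -> 'rV[F]_n) :
  (forall k, L i (f k)) -> L i (\sum_k f k).
Proof. by move=> H; apply: (big_ind (L i)) => //; [apply: in_L0 | apply: in_LD]. Qed.

Lemma a_mul0l w : mul 0 w = 0.
Proof.
case: Hmul => Hl _ _ _.
have := Hl 1 0 0 w; rewrite !scale1r addr0.
by move=> /(congr1 (fun z => z - mul 0 w)); rewrite subrr addrK => <-.
Qed.
Lemma a_mulDl u v w : mul (u + v) w = mul u w + mul v w.
Proof. by case: Hmul => Hl _ _ _; rewrite -{1}[u]scale1r Hl scale1r. Qed.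
Lemma a_mulZl a u w : mul (a *: u) w = a *: mul u w.
Proof. by case: Hmul => Hl _ _ _; rewrite -[a *: u]addr0 Hl a_mul0l addr0. Qed.
Lemma a_mul0r w : mul w 0 = 0.
Proof.
case: Hmul => _ Hr _ _.
have := Hr 1 0 0 w; rewrite !scale1r addr0.
by move=> /(congr1 (fun z => z - mul w 0)); rewrite subrr addrK => <-.
Qed.
Lemma a_mulDr u v w : mul w (u + v) = mul w u + mul w v.
Proof. by case: Hmul => _ Hr _ _; rewrite -{1}[u]scale1r Hr scale1r. Qed.
Lemma a_mulZr a u w : mul w (a *: u) = a *: mul w u.
Proof. by case: Hmul => _ Hr _ _; rewrite -[a *: u]addr0 Hr a_mul0r addr0. Qed.
Lemma a_mul1l u : mul one u = u. Proof. by case: Hmul. Qed.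
Lemma a_mul1r u : mul u one = u. Proof. by case: Hmul. Qed.
Lemma a_mulNl u w : mul (- u) w = - mul u w.
Proof. by rewrite -scaleN1r a_mulZl scaleN1r. Qed.
Lemma a_mulNr u w : mul w (- u) = - mul w u.
Proof. by rewrite -scaleN1r a_mulZr scaleN1r. Qed.
Lemma a_mulBl u v w : mul (u - v) w = mul u w - mul v w.
Proof. by rewrite a_mulDl a_mulNl. Qed.
Lemma a_mulBr u v w : mul w (u - v) = mul w u - mul w v.
Proof. by rewrite a_mulDr a_mulNr. Qed.

Lemma in_L_mul a b x y : L a x -> L b y -> L (a + b) (mul x y).
Proof.
move=> Hx Hy.
pose P x := L (a + b) (mul x y).
apply: (@in_L_ind P a) Hx.
- by rewrite /P a_mul0l; apply: in_L0.
- by move=> u v; rewrite /P a_mulDl; apply: in_LD.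
- by move=> c u; rewrite /P a_mulZl; apply: in_LZ.
move=> k w ka Hw; rewrite /P.
pose Q y := L (a + b) (mul w y).
apply: (@in_L_ind Q b) Hy.
- by rewrite /Q a_mul0r; apply: in_L0.
- by move=> u v; rewrite /Q a_mulDr; apply: in_LD.
- by move=> c u; rewrite /Q a_mulZr; apply: in_LZ.
move=> k' w' k'b Hw'; rewrite /Q.
apply: (@in_Lword _ (k + k')) => //; first exact: leq_add.
exact: word_mul.
Qed.

Lemma word0 k w : word k w -> k = 0%N -> w = one.
Proof.
elim => [//|s _ //|a b u v _ IHu _ IHv].
by move/eqP; rewrite addn_eq0 => /andP [/eqP /IHu -> /eqP /IHv ->]; rewrite a_mul1l.
Qed.

End Gen.

Definition chain_closed (J : seq nat) :=
  forall x, x \in J -> (1 < x)%N -> exists a b, [/\ a \in J, b \in J & (a + b)%N = x].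

Section Jump.
Variables (F : fieldType) (n : nat).
Variables (mul : 'rV[F]_n -> 'rV[F]_n -> 'rV[F]_n) (one : 'rV[F]_n) (S : seq 'rV[F]_n).
Hypothesis Hmul : is_unital_algebra mul one.
Hypothesis Hn : (2 <= n)%N.

Local Notation L := (in_L mul one S).
Local Notation word := (is_word mul one S).

Lemma spanL i (X : seq 'rV[F]_n) x :
  (forall y, y \in X -> L i y) -> x \in <<X>>%VS -> L i x.
Proof.
move=> H Hx; rewrite (coord_span (X := in_tuple X) Hx).
apply: in_L_sum => k; apply: in_LZ; apply: H; exact: mem_nth.
Qed.

Lemma L0_sub v : L 0 v -> v \in <<[:: one]>>%VS.
Proof.
apply: (in_L_ind (P := fun v => v \in <<[:: one]>>%VS)).
- exact: mem0v.
- by move=> x y; apply: memvD.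
- by move=> a x; apply: memvZ.
move=> k w; rewrite leqn0 => /eqP -> /word0 -> //.
by apply: memv_span; rewrite mem_head.
Qed.

Lemma L0_not_full : ~ L_full mul one S 0.
Proof.
move=> Hf.
have sub : (fullv <= <<[:: one]>>)%VS by apply/subvP => v _; apply: L0_sub.
have := dimvS sub; rewrite dimvf dim_matrix mul1r => h.
have := leq_trans h (dim_span _); rewrite /= => h2.
by have := leq_trans Hn h2.
Qed.

Lemma one_neq0 : one != 0.
Proof.
apply/eqP => e.
have i0 : (0 < n)%N by apply: leq_trans Hn.
have := a_mul1l Hmul (const_mx 1); rewrite e (a_mul0l Hmul) => /(congr1 (fun M : 'rV[F]_n => M 0 (Ordinal i0))).
by rewrite !mxE => /eqP; rewrite eq_sym oner_eq0.
Qed.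

Definition jump d := exists v, L d v /\ ~ L d.-1 v.
Definition jb d : bool := if excluded_middle_informative (jump d) then true else false.
Lemma jbP d : reflect (jump d) (jb d).
Proof. by rewrite /jb; case: excluded_middle_informative => h; constructor. Qed.

Lemma nojump d : ~ jump d -> forall v, L d v -> L d.-1 v.
Proof. by move=> nj v Lv; apply: NNPP => nL; apply: nj; exists v. Qed.

Variable j : nat.
Hypothesis Hlen : set_length mul one S j.

Definition JJ := filter jb (iota 1 j).

Lemma memJ d : (d \in JJ) = jb d && (1 <= d <= j)%N.
Proof. by rewrite mem_filter mem_iota add1n ltnS. Qed.

Lemma prop1 d : (d <= j)%N -> forall v, L d v ->
  exists d', [/\ (d' <= d)%N, d' = 0%N \/ d' \in JJ & L d' v].
Proof.
elim: d => [|d IH] dj v Lv; first by exists 0%N; split => //; left.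
case: (boolP (jb d.+1)) => h.
  by exists d.+1; split => //; right; rewrite memJ h dj.
have := nojump (fun hj => (negP h) (introT (jbP _) hj)) Lv => /= Lv'.
have [d' [d'd H1 H2]] := IH (ltnW dj) v Lv'.
by exists d'; split => //; apply: leq_trans d'd _.
Qed.

Lemma jpos : (0 < j)%N.
Proof.
case: Hlen => Hf _; rewrite lt0n; apply/eqP => j0.
by apply: L0_not_full; rewrite -j0.
Qed.

Lemma jinJ : j \in JJ.
Proof.
rewrite memJ jpos leqnn !andbT; apply/jbP.
case: Hlen => Hf Hmin.
have : ~ L_full mul one S j.-1.
  move=> Hf'; have := Hmin _ Hf'; have := jpos; case: (j) => // j' _ /=.
  by rewrite ltnn.
move=> /not_all_ex_not [v nv]; exists v; split => //; exact: Hf.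
Qed.

Lemma closure d : d \in JJ -> (1 < d)%N ->
  exists a b, [/\ a \in JJ, b \in JJ & (a + b)%N = d].
Proof.
move=> dJ d1; apply: NNPP => nab.
move: (dJ); rewrite memJ => /andP [/jbP [v [Lv nLv]] /andP [_ dj]].
apply: nLv; move: v Lv.
apply: (in_L_ind (P := L d.-1)).
- exact: in_L0.
- by move=> x y; apply: in_LD.
- by move=> a x; apply: in_LZ.
move=> k w kd Hw; elim: Hw kd => [|s Hs|a b u w0 Hu IHu Hw IHw] kd.
- by apply: (in_Lword (k := 0)) => //; apply: word_one.
- by apply: (in_Lword (k := 1)) => //; [case: (d) d1 | apply: word_gen].
case: (ltnP (a + b) d) => h.
  apply: (in_Lword (k := (a + b)%N)); first by case: (d) h.
  exact: word_mul.
have e : (a + b)%N = d by apply/eqP; rewrite eqn_leq kd h.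
case: (posnP a) => a0.
  rewrite (word0 Hmul Hu a0) (a_mul1l Hmul); apply: IHw.
  by rewrite -e a0.
case: (posnP b) => b0.
  rewrite (word0 Hmul Hw b0) (a_mul1r Hmul); apply: IHu.
  by rewrite -e b0 addn0.
have ad : (a <= j)%N by apply: leq_trans dj; rewrite -e leq_addr.
have bd : (b <= j)%N by apply: leq_trans dj; rewrite -e leq_addl.
have [a' [a'a Ha' La']] := prop1 ad (in_Lword (leqnn a) Hu).
have [b' [b'b Hb' Lb']] := prop1 bd (in_Lword (leqnn b) Hw).
have Lm := in_L_mul Hmul La' Lb'.
case: (ltnP (a' + b') d) => h'.
  by apply: in_L_mono Lm; case: (d) h'.
have ea : a' = a by apply/eqP; rewrite eqn_leq a'a /=; move: h'; rewrite -e; lia.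
have eb : b' = b by apply/eqP; rewrite eqn_leq b'b /=; move: h'; rewrite -e; lia.
exfalso; apply: nab; exists a, b; split => //.
  by case: Ha' => [a'0|]; [move: a0; rewrite -ea a'0 | rewrite ea].
by case: Hb' => [b'0|]; [move: b0; rewrite -eb b'0 | rewrite eb].
Qed.

Lemma oneinJ : 1%N \in JJ.
Proof.
suff H : forall d, d \in JJ -> 1%N \in JJ by apply: H jinJ.
elim/ltn_ind => d IH dJ.
have := dJ; rewrite memJ => /andP [_ /andP [d1 _]].
case: (ltnP 1 d) => h.
  2: by have e : d = 1%N by [apply/eqP; rewrite eqn_leq h d1]; rewrite -e.
have [a [b [aJ bJ e]]] := closure dJ h.
apply: (IH a) => //; rewrite -e -[X in (X < _)%N]addn0 ltn_add2l.
by move: bJ; rewrite memJ => /andP [_ /andP []].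
Qed.

Definition pick d := epsilon (inhabits 0) (fun v => L d v /\ ~ L d.-1 v).

Lemma pick_spec d : d \in JJ -> L d (pick d) /\ ~ L d.-1 (pick d).
Proof. by rewrite memJ => /andP [/jbP h _]; exact: (epsilon_spec (inhabits 0) (fun v => L d v /\ ~ L d.-1 v) h). Qed.

Lemma free_chain K : sorted (fun x y => (y < x)%N) K -> (forall d, d \in K -> d \in JJ) ->
  free (map pick K ++ [:: one]) /\
  (forall x, x \in <<map pick K ++ [:: one]>>%VS -> L (head 0%N K) x).
Proof.
elim: K => [|d K IH] /= sK KJ.
  split; first by rewrite /free span_seq1 dim_vline one_neq0.
  by move=> x; apply: spanL => y; rewrite inE => /eqP ->; apply: (in_Lword (k := 0)) => //; apply: word_one.
have [sK' allK] : sorted (fun x y => (y < x)%N) K /\ all (fun y => (y < d)%N) K.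
  move: sK; rewrite path_sortedE; first by case/andP.
  by move=> x y z h1 h2; apply: ltn_trans h1.
have dJ : d \in JJ by apply: KJ; rewrite mem_head.
have KJ' : forall x, x \in K -> x \in JJ by move=> x h; apply: KJ; rewrite inE h orbT.
have [IHf IHs] := IH sK' KJ'.
have hd : (head 0%N K < d)%N.
  case: (K) allK => [|k K2] /=; last by case/andP.
  by move: dJ; rewrite memJ => /andP [_ /andP []].
have HsubK : forall x, x \in <<map pick K ++ [:: one]>>%VS -> L d.-1 x.
  by move=> x /IHs; apply: in_L_mono; case: (d) hd.
have [Lp nLp] := pick_spec dJ.
split.
  rewrite free_cons IHf andbT; apply/negP => /HsubK; exact: nLp.
move=> x; apply: spanL => y; rewrite inE => /orP [/eqP -> //|].
move=> /memv_span /IHs; apply: in_L_mono; exact: ltnW.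
Qed.

Lemma size_JJ : (size JJ < n)%N.
Proof.
have sJ : sorted ltn JJ by apply: sorted_filter; [exact: ltn_trans | exact: iota_ltn_sorted].
have sR : sorted (fun x y => (y < x)%N) (rev JJ) by rewrite rev_sorted.
have RJ : forall d, d \in rev JJ -> d \in JJ by move=> d; rewrite mem_rev.
have [Hf _] := free_chain sR RJ.
move: Hf; rewrite /free => /eqP e.
have := dimvS (subvf <<map pick (rev JJ) ++ [:: one]>>%VS).
by rewrite e dimvf dim_matrix mul1r size_cat size_map size_rev addn1.
Qed.

Lemma jump_chain : exists J : seq nat,
  [/\ uniq J, (forall x, x \in J -> 0 < x <= j)%N, 1%N \in J,
      j \in J & chain_closed J] /\ (size J < n)%N.
Proof.
exists JJ; split; last exact: size_JJ; split.
- apply: sorted_uniq; [exact: ltn_trans | exact: ltnn |].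
  by apply: sorted_filter; [exact: ltn_trans | exact: iota_ltn_sorted].
- by move=> x; rewrite memJ => /andP [].
- exact: oneinJ.
- exact: jinJ.
- exact: closure.
Qed.

End Jump.

Lemma count_split (J : seq nat) a x : (a <= x)%N ->
  count (fun y => y < x)%N J = (count (fun y => y < a)%N J + count (fun y => (a <= y) && (y < x))%N J)%N.
Proof.
move=> ax; elim: J => //= y J ->.
case: (ltnP y a) => h1 /=; case: (ltnP y x) => h2 /=; try lia.
Qed.

Lemma chain_bound (J : seq nat) : (forall x, x \in J -> 0 < x)%N -> chain_closed J ->
  forall x, x \in J -> (x <= 2 ^ size J)%N.
Proof.
move=> pos cl.
suff H : forall x, x \in J -> (x <= 2 ^ count (fun y => y < x)%N J)%N.
  move=> x xJ; apply: leq_trans (H x xJ) _; rewrite leq_exp2l //; exact: count_size.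
elim/ltn_ind => x IH xJ.
case: (ltnP 1 x) => h; last by apply: leq_trans h _; rewrite expn_gt0.
have [a [b [aJ bJ e]]] := cl x xJ h.
have a0 := pos a aJ; have b0 := pos b bJ.
have ax : (a < x)%N by lia.
have bx : (b < x)%N by lia.
have ca : (count (fun y => y < a)%N J < count (fun y => y < x)%N J)%N.
  rewrite (count_split J (ltnW ax)) -[X in (X < _)%N]addn0 ltn_add2l -has_count.
  by apply/hasP; exists a => //; rewrite leqnn ax.
have cb : (count (fun y => y < b)%N J < count (fun y => y < x)%N J)%N.
  rewrite (count_split J (ltnW bx)) -[X in (X < _)%N]addn0 ltn_add2l -has_count.
  by apply/hasP; exists b => //; rewrite leqnn bx.
have ha := IH a ax aJ; have hb := IH b bx bJ.
set c := count (fun y => y < x)%N J in ca cb *.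
have : (2 ^ count (fun y => y < a)%N J <= 2 ^ c.-1)%N by rewrite leq_exp2l //; lia.
have : (2 ^ count (fun y => y < b)%N J <= 2 ^ c.-1)%N by rewrite leq_exp2l //; lia.
have e2 : (2 ^ c = 2 * 2 ^ c.-1)%N by rewrite -expnS prednK //; lia.
rewrite e2; lia.
Qed.

Section Constr.
Variables (F : fieldType) (m : nat) (J : seq nat) (D : nat).
Hypotheses (uJ : uniq J) (posJ : forall x, x \in J -> (0 < x)%N) (oneJ : 1%N \in J)
  (DJ : D \in J) (maxJ : forall x, x \in J -> (x <= D)%N) (clJ : chain_closed J)
  (sizeJ : (size J <= m)%N).

Local Notation V := 'rV[F]_m.+1.
Local Notation I := 'I_m.+1.

Lemma ord_pos (k : I) : k != ord0 -> (0 < k)%N.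
Proof. by rewrite lt0n; apply: contra => /eqP h; apply/eqP/val_inj. Qed.

Definition deg (k : I) : nat :=
  if k == ord0 then 0%N else if (k <= size J)%N then nth 0%N J k.-1 else 1%N.
Definition idx (d : nat) : I := inord (index d J).+1.
Definition ev (k : I) : V := delta_mx 0 k.
Definition TT (p q : I) : V :=
  if p == ord0 then ev q else if q == ord0 then ev p else
  if [&& (p <= size J)%N, (q <= size J)%N & (deg p + deg q)%N \in J]
  then ev (idx (deg p + deg q)) else 0.
Definition amul (u v : V) : V := \sum_p \sum_q (u 0 p * v 0 q) *: TT p q.
Definition aone : V := ev ord0.

Lemma evE q k : ev q 0 k = (k == q)%:R.
Proof. by rewrite mxE eqxx. Qed.

Lemma idx_val d : d \in J -> (idx d : nat) = (index d J).+1.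
Proof.
move=> dJ; rewrite inordK // ltnS; apply: leq_trans sizeJ; by rewrite index_mem.
Qed.

Lemma idx_neq0 d : d \in J -> idx d != ord0.
Proof. by move=> dJ; apply/eqP => /(congr1 val); rewrite /= idx_val. Qed.

Lemma deg_idx d : d \in J -> deg (idx d) = d.
Proof.
move=> dJ; rewrite /deg (negbTE (idx_neq0 dJ)) idx_val // index_mem dJ /=.
exact: nth_index.
Qed.

Lemma idx_deg k : k != ord0 -> (k <= size J)%N -> idx (deg k) = k.
Proof.
move=> k0 kJ; have kpos := ord_pos k0.
have hlt : (k.-1 < size J)%N by lia.
rewrite /deg (negbTE k0) kJ /idx index_uniq //.
by rewrite prednK // inord_val.
Qed.

Lemma deg_eq0 k : (deg k == 0%N) = (k == ord0).
Proof.
rewrite /deg; case: (eqVneq k ord0) => [_|k0] //.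
case: ifP => kJ; last by [].
have kpos := ord_pos k0.
have : nth 0%N J k.-1 \in J by apply: mem_nth; rewrite prednK.
by move/posJ; case: (nth _ _ _).
Qed.

Lemma deg_le k : (deg k <= D)%N.
Proof.
rewrite /deg; case: (eqVneq k ord0) => [_|k0] //.
case: ifP => kJ; last by have := maxJ oneJ.
have kpos := ord_pos k0.
by apply: maxJ; apply: mem_nth; rewrite prednK.
Qed.

Definition hom (d : nat) (x : V) := forall k, deg k != d -> x 0 k = 0.
Definition ge (d : nat) (x : V) := forall k, (deg k < d)%N -> x 0 k = 0.

Lemma hom_ev k : hom (deg k) (ev k).
Proof. by move=> k' h; rewrite evE; case: (eqVneq k' k) h => [->|_ _]; rewrite ?eqxx. Qed.

Lemma ge_ev k : ge (deg k) (ev k).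
Proof. by move=> k' h; rewrite evE; case: (eqVneq k' k) h => [->|_ _]; rewrite ?ltnn. Qed.

Lemma hom_TT p q : hom (deg p + deg q) (TT p q).
Proof.
rewrite /TT; case: eqP => [->|p0].
  by have := @hom_ev q; rewrite /deg eqxx add0n.
case: eqP => [->|q0].
  by have := @hom_ev p; rewrite /deg eqxx addn0.
case: ifP => [/and3P [_ _ h]|_]; last by move=> k _; rewrite mxE.
by have := @hom_ev (idx (deg p + deg q)); rewrite deg_idx.
Qed.

Lemma amul_coef u v k : amul u v 0 k = \sum_p \sum_q u 0 p * v 0 q * TT p q 0 k.
Proof.
rewrite /amul summxE; apply: eq_bigr => p _; rewrite summxE; apply: eq_bigr => q _.
by rewrite mxE.
Qed.

Lemma ge_mul a b x y : ge a x -> ge b y -> ge (a + b) (amul x y).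
Proof.
move=> hx hy k hk; rewrite amul_coef big1 // => p _; rewrite big1 // => q _.
case: (ltnP (deg p) a) => hp; first by rewrite hx // !mul0r.
case: (ltnP (deg q) b) => hq; first by rewrite (hy q) // mulr0 mul0r.
rewrite hom_TT ?mulr0 //; apply/eqP => e; move: hk; rewrite e; lia.
Qed.

Lemma hom_mul a b x y : hom a x -> hom b y -> hom (a + b) (amul x y).
Proof.
move=> hx hy k hk; rewrite amul_coef big1 // => p _; rewrite big1 // => q _.
case: (eqVneq (deg p) a) => hp; last by rewrite hx // !mul0r.
case: (eqVneq (deg q) b) => hq; last by rewrite (hy q) // mulr0 mul0r.
by rewrite hom_TT ?mulr0 // hp hq.
Qed.

Lemma amul_el p v : amul (ev p) v = \sum_q v 0 q *: TT p q.
Proof.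
rewrite /amul (bigD1 p) //= [X in _ + X]big1 => [|p' np'].
  by rewrite addr0; apply: eq_bigr => q _; rewrite evE eqxx mul1r.
by apply: big1 => q _; rewrite evE (negbTE np') mul0r scale0r.
Qed.

Lemma amul_er u q : amul u (ev q) = \sum_p u 0 p *: TT p q.
Proof.
rewrite /amul; apply: eq_bigr => p _.
rewrite (bigD1 q) //= [X in _ + X]big1 => [|q' nq'].
  by rewrite addr0 evE eqxx mulr1.
by rewrite evE (negbTE nq') mulr0 scale0r.
Qed.

Lemma amul_ee p q : amul (ev p) (ev q) = TT p q.
Proof.
rewrite amul_el (bigD1 q) //= [X in _ + X]big1 => [|q' nq'].
  by rewrite addr0 evE eqxx scale1r.
by rewrite evE (negbTE nq') scale0r.
Qed.

Lemma unital : is_unital_algebra amul aone.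
Proof.
split.
- move=> a u v w; rewrite /amul scaler_sumr -big_split; apply: eq_bigr => p _.
  rewrite scaler_sumr -big_split; apply: eq_bigr => q _.
  by rewrite !mxE mulrDl scalerDl -mulrA scalerA.
- move=> a u v w; rewrite /amul scaler_sumr -big_split; apply: eq_bigr => p _.
  rewrite scaler_sumr -big_split; apply: eq_bigr => q _.
  by rewrite !mxE mulrDr scalerDl mulrCA scalerA.
- move=> u; rewrite amul_el [RHS]row_sum_delta; apply: eq_bigr => q _.
  by rewrite /TT eqxx.
- move=> u; rewrite amul_er [RHS]row_sum_delta; apply: eq_bigr => p _.
  by rewrite /TT; case: eqP => [->|_]; rewrite ?eqxx.
Qed.


Local Notation L S := (in_L amul aone S).

Lemma ge_add d x y : ge d x -> ge d y -> ge d (x + y).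
Proof. by move=> hx hy k hk; rewrite mxE hx ?hy ?addr0. Qed.
Lemma ge_opp d x : ge d x -> ge d (- x).
Proof. by move=> hx k hk; rewrite mxE hx ?oppr0. Qed.
Lemma ge_mono d d' x : (d' <= d)%N -> ge d x -> ge d' x.
Proof. by move=> h hx k hk; apply: hx; apply: leq_trans hk h. Qed.
Lemma ge0 d : ge d 0.
Proof. by move=> k _; rewrite mxE. Qed.

Lemma stepC S : (forall g, deg g = 1%N -> exists y, L S 1 y /\ ge 2 (ev g - y)) ->
  forall d k, deg k = d -> (0 < d)%N -> exists y, L S d y /\ ge d.+1 (ev k - y).
Proof.
move=> H1; elim/ltn_ind => d IH k dk d0.
case: (ltnP 1 d) => d1; last first.
  have e1 : d = 1%N by lia.
  by rewrite e1; apply: H1; rewrite dk.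
have k0 : k != ord0 by apply/eqP => e; move: dk; rewrite e /deg eqxx; lia.
case: (leqP k (size J)) => kJ; last by move: dk; rewrite /deg (negbTE k0) leqNgt kJ /=; lia.
have dJ : d \in J by rewrite -dk /deg (negbTE k0) kJ; apply: mem_nth; rewrite prednK // ord_pos.
have [a [b [aJ bJ eab]]] := clJ dJ d1.
have a0 := posJ aJ; have b0 := posJ bJ.
have [yp [Lp gp]] := IH a ltac:(lia) (idx a) (deg_idx aJ) a0.
have [yq [Lq gq]] := IH b ltac:(lia) (idx b) (deg_idx bJ) b0.
exists (amul yp yq); split.
  by rewrite -eab; apply: (in_L_mul unital) Lp Lq.
have ekey : ev k = amul (ev (idx a)) (ev (idx b)).
  rewrite amul_ee /TT (negbTE (idx_neq0 aJ)) (negbTE (idx_neq0 bJ)) !deg_idx // eab dJ.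
  rewrite !idx_val // !index_mem aJ bJ /=.
  by rewrite -dk idx_deg.
have gea : ge a (ev (idx a)) by have := @ge_ev (idx a); rewrite deg_idx.
have geb : ge b (ev (idx b)) by have := @ge_ev (idx b); rewrite deg_idx.
set hp := ev (idx a) - yp in gp; set hq := ev (idx b) - yq in gq.
have eyp : yp = ev (idx a) - hp by rewrite /hp opprB addrC subrK.
have eyq : yq = ev (idx b) - hq by rewrite /hq opprB addrC subrK.
clearbody hp hq; rewrite eyp eyq.
have gB : ge d.+1 (amul (ev (idx a)) hq) by rewrite -eab -addnS; apply: ge_mul.
have gC : ge d.+1 (amul hp (ev (idx b))) by rewrite -eab -addSn; apply: ge_mul.
have gE : ge d.+1 (amul hp hq).
  apply: (ge_mono (d := (a.+1 + b.+1)%N)); first lia.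
  exact: ge_mul.
rewrite ekey (a_mulBl unital) !(a_mulBr unital) => k' hk'.
by rewrite !mxE (gB k' hk') (gC k' hk') (gE k' hk') !subr0 subrr.
Qed.

Lemma UB S : (forall g, deg g = 1%N -> exists y, L S 1 y /\ ge 2 (ev g - y)) ->
  L_full amul aone S D.
Proof.
move=> H; have C := stepC H.
have key : forall t k, (D - deg k)%N = t -> L S D (ev k).
  elim/ltn_ind => t IH k ekt.
  case: (eqVneq k ord0) => [->|k0].
    by apply: (in_Lword (k := 0)) => //; apply: word_one.
  have dpos : (0 < deg k)%N by rewrite lt0n deg_eq0.
  have [y [Ly gy]] := C _ k erefl dpos.
  have -> : ev k = y + (ev k - y) by rewrite addrC subrK.
  apply: in_LD; first exact: in_L_mono (deg_le k) Ly.
  rewrite [ev k - y]row_sum_delta; apply: in_L_sum => k'.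
  case: (ltnP (deg k) (deg k')) => h.
    apply: in_LZ; apply: (IH (D - deg k')%N) => //.
    have := deg_le k'; have := deg_le k; lia.
  by rewrite gy // scale0r; apply: in_L0.
move=> v; rewrite [v]row_sum_delta; apply: in_L_sum => k; apply: in_LZ.
exact: key.
Qed.

Definition Pr (x : V) : V := \row_k (if deg k == 1%N then x 0 k else 0).

Lemma PrD x y : Pr (x + y) = Pr x + Pr y.
Proof. by apply/rowP => k; rewrite !mxE; case: ifP; rewrite ?addr0. Qed.
Lemma PrZ c x : Pr (c *: x) = c *: Pr x.
Proof. by apply/rowP => k; rewrite !mxE; case: ifP; rewrite ?mulr0. Qed.
Lemma Pr0 : Pr 0 = 0.
Proof. by apply/rowP => k; rewrite !mxE; case: ifP. Qed.
Lemma Pr_ge2 x : ge 2 x -> Pr x = 0.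
Proof.
move=> hx; apply/rowP => k; rewrite !mxE; case: eqP => // h.
by rewrite hx // h.
Qed.
Lemma Pr_one : Pr aone = 0.
Proof.
apply/rowP => k; rewrite !mxE; case: eqP => // h.
rewrite eqxx /=; case: eqP => // e; move: h; rewrite e /deg eqxx //.
Qed.
Lemma Pr_shift (x : V) c : Pr (x - c *: aone) = Pr x.
Proof. by rewrite PrD -scaleNr PrZ Pr_one scaler0 addr0. Qed.

Lemma ge1_shift (x : V) : ge 1 (x - x 0 ord0 *: aone).
Proof.
move=> k hk; have : deg k == 0%N by lia.
rewrite deg_eq0 => /eqP ->.
by rewrite !mxE eqxx mulr1 subrr.
Qed.

Lemma Pr_mul u w : Pr (amul u w) = u 0 ord0 *: Pr w + w 0 ord0 *: Pr u.
Proof.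
have eu : u = u 0 ord0 *: aone + (u - u 0 ord0 *: aone) by rewrite addrC subrK.
have ew : w = w 0 ord0 *: aone + (w - w 0 ord0 *: aone) by rewrite addrC subrK.
have gu := ge1_shift u; have gw := ge1_shift w.
set u' := u - _ in eu gu *; set w' := w - _ in ew gw *.
have g2 : ge 2 (amul u' w') by apply: (ge_mul gu gw).
have Pu : Pr u' = Pr u by rewrite /u' Pr_shift.
have Pw : Pr w' = Pr w by rewrite /w' Pr_shift.
clearbody u' w'.
rewrite {1}eu (a_mulDl unital) (a_mulZl unital) (a_mul1l unital).
have -> : amul u' w = w 0 ord0 *: u' + amul u' w'.
  by rewrite {1}ew (a_mulDr unital) (a_mulZr unital) (a_mul1r unital).
by rewrite !PrD !PrZ (Pr_ge2 g2) Pu addr0.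
Qed.

Lemma words_P S k w : is_word amul aone S k w -> Pr w \in <<map Pr S>>%VS.
Proof.
elim => [|s Hs|a b u v _ Hu _ Hv].
- by rewrite Pr_one mem0v.
- by apply: memv_span; apply: map_f.
by rewrite Pr_mul; apply: memvD; apply: memvZ.
Qed.

Lemma gen_hyp S i0 : L_full amul aone S i0 ->
  forall g, deg g = 1%N -> exists y, L S 1 y /\ ge 2 (ev g - y).
Proof.
move=> Hf g dg.
have HP : Pr (ev g) \in <<map Pr S>>%VS.
  have := Hf (ev g); apply: (in_L_ind (P := fun v => Pr v \in <<map Pr S>>%VS)).
  - by rewrite Pr0 mem0v.
  - by move=> x y hx hy; rewrite PrD; apply: memvD.
  - by move=> c x hx; rewrite PrZ; apply: memvZ.
  by move=> k w _; apply: words_P.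
have Prg : Pr (ev g) = ev g.
  apply/rowP => k; rewrite !mxE eqxx /=.
  by case: (eqVneq k g) => [->|kg]; rewrite ?dg ?eqxx //=; case: ifP.
rewrite Prg in HP.
set X := in_tuple (map Pr S).
have eg := coord_span (X := X) HP.
have g0 : g != ord0 by rewrite -deg_eq0 dg.
exists (\sum_i coord X i (ev g) *: (S`_i - (S`_i 0 ord0) *: aone)); split.
  apply: in_L_sum => i; apply: in_LZ; apply: in_LD.
    apply: (in_Lword (k := 1)) => //; apply: word_gen; apply: mem_nth.
    by rewrite -(size_map Pr S); exact: ltn_ord i.
  rewrite -scaleNr; apply: in_LZ; apply: (in_Lword (k := 0)) => //; exact: word_one.
move=> k hk; rewrite {1}eg mxE [X in _ + X]mxE !summxE -sumrB big1 // => i _.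
have iS : (i < size S)%N by rewrite -(size_map Pr S); exact: ltn_ord i.
rewrite (nth_map 0) // !mxE eqxx /=.
case: (eqVneq k ord0) => [->|k0].
  by rewrite /deg !eqxx /= mulr1 subrr mulr0 subrr.
have dk : deg k == 1%N by move: hk; rewrite -deg_eq0 in k0; move: k0; lia.
by rewrite dk /= mulr0 subr0 subrr.
Qed.

Definition S0 : seq V := [seq ev k | k <- enum I & deg k == 1%N].

Lemma S0_hyp g : deg g = 1%N -> exists y, L S0 1 y /\ ge 2 (ev g - y).
Proof.
move=> dg; exists (ev g); split; last by rewrite subrr; apply: ge0.
apply: (in_Lword (k := 1)) => //; apply: word_gen.
by apply: map_f; rewrite mem_filter mem_enum dg eqxx.
Qed.

Lemma S0_words k w : is_word amul aone S0 k w -> hom k w.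
Proof.
elim => [|s Hs|a b u v _ Hu _ Hv].
- by have := @hom_ev ord0; rewrite /deg eqxx.
- move: Hs => /mapP [k' ]; rewrite mem_filter => /andP [/eqP dk _] ->.
  by have := @hom_ev k'; rewrite dk.
exact: hom_mul.
Qed.

Lemma S0_L i v : L S0 i v -> forall k, (i < deg k)%N -> v 0 k = 0.
Proof.
apply: (in_L_ind (P := fun v => forall k, (i < deg k)%N -> v 0 k = 0)).
- by move=> k _; rewrite mxE.
- by move=> x y hx hy k hk; rewrite mxE hx ?hy ?addr0.
- by move=> c x hx k hk; rewrite mxE hx ?mulr0.
move=> k w ki Hw k' hk'; apply: (S0_words Hw).
by apply/eqP => e; move: hk'; rewrite e; lia.
Qed.

Lemma S0_len : set_length amul aone S0 D.
Proof.
split; first exact: UB S0_hyp.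
move=> k' Hf; rewrite leqNgt; apply/negP => hk.
have := S0_L (Hf (ev (idx D))) (k := idx D); rewrite deg_idx // => /(_ hk).
by rewrite evE eqxx; apply/eqP; exact: oner_neq0.
Qed.

Lemma constr_realizable : realizable F m.+1 D.
Proof.
exists amul, aone; split; first exact: unital.
split; first by exists S0; exact: S0_len.
move=> S k [Hf Hmin]; apply: Hmin; apply: UB; exact: gen_hyp Hf.
Qed.

End Constr.

Lemma max_exists (P : nat -> Prop) (N x : nat) : P x -> (forall y, P y -> (y <= N)%N) ->
  exists z, [/\ P z, (x <= z)%N & forall y, P y -> (y <= z)%N].
Proof.
move=> Px HN.
suff H : forall k x, (N - x)%N = k -> P x ->
  exists z, [/\ P z, (x <= z)%N & forall y, P y -> (y <= z)%N] by exact: H _ x erefl Px.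
elim/ltn_ind => k IH x0 ek Px0.
case: (classic (exists y, P y /\ (x0 < y)%N)) => [[y [Py lt]]|nex].
  have yN := HN y Py.
  have [z [Pz yz hz]] := IH (N - y)%N ltac:(lia) y erefl Py.
  by exists z; split => //; lia.
exists x0; split => // y Py; rewrite leqNgt; apply/negP => lt.
by apply: nex; exists y.
Qed.

Lemma real_bound (F : fieldType) m j : (2 <= m)%N -> realizable F m j -> (j <= 2 ^ m)%N.
Proof.
move=> m2 [mul [one [Hmul [[S Hlen] _]]]].
have [J [[uJ rJ oJ jJ cJ] sJ]] := jump_chain Hmul m2 Hlen.
have pos : forall x, x \in J -> (0 < x)%N by move=> x /rJ /andP [].
apply: leq_trans (chain_bound pos cJ jJ) _.
by rewrite leq_exp2l //; apply: ltnW.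
Qed.

Lemma real_chain (F : fieldType) m (J : seq nat) D :
  uniq J -> (forall x, x \in J -> (0 < x)%N) -> 1%N \in J -> D \in J ->
  (forall x, x \in J -> (x <= D)%N) -> chain_closed J -> (size J <= m)%N ->
  realizable F m.+1 D.
Proof.
move=> uJ posJ oJ DJ maxJ cJ sJ.
exact: (@constr_realizable F m J D uJ posJ oJ DJ maxJ cJ sJ).
Qed.

Lemma realizable_double (F : fieldType) n i : (2 <= n)%N -> realizable F n i ->
  realizable F n.+2 (2 * i) /\ realizable F n.+2 (2 * i + 1).
Proof.
move=> n2 [mul [one [Hmul [[S Hlen] _]]]].
have [J [[uJ rJ oJ iJ cJ] sJ]] := jump_chain Hmul n2 Hlen.
have i0 : (0 < i)%N by have := rJ i iJ; case/andP.
have notin : forall y, (i < y)%N -> y \notin J.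
  by move=> y hy; apply/negP => /rJ /andP [_ h]; lia.
split.
  apply: (@real_chain F n.+1 (J ++ [:: 2 * i]%N)).
  - rewrite cat_uniq uJ /= andbT orbF; apply: notin; lia.
  - move=> x; rewrite mem_cat inE => /orP [/rJ /andP [] //|/eqP ->]; lia.
  - by rewrite mem_cat oJ.
  - by rewrite mem_cat inE eqxx orbT.
  - move=> x; rewrite mem_cat inE => /orP [/rJ /andP [_ h]|/eqP ->]; lia.
  - move=> x; rewrite mem_cat inE => /orP [xJ|/eqP ->] x1.
      have [a [b [aJ bJ e]]] := cJ x xJ x1.
      by exists a, b; rewrite !mem_cat aJ bJ.
    by exists i, i; rewrite !mem_cat iJ; split => //; lia.
  - rewrite size_cat /=; lia.
apply: (@real_chain F n.+1 (J ++ [:: 2 * i; 2 * i + 1]%N)).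
- rewrite cat_uniq uJ /= !inE !negb_or !andbT; apply/andP; split; last lia.
  by apply/andP; split; apply: notin; lia.
- move=> x; rewrite mem_cat !inE => /orP [/rJ /andP [] //|/orP [/eqP ->|/eqP ->]]; lia.
- by rewrite mem_cat oJ.
- by rewrite mem_cat !inE eqxx !orbT.
- move=> x; rewrite mem_cat !inE => /orP [/rJ /andP [_ h]|/orP [/eqP ->|/eqP ->]]; lia.
- move=> x; rewrite mem_cat !inE => /orP [xJ|/orP [/eqP ->|/eqP ->]] x1.
  + have [a [b [aJ bJ e]]] := cJ x xJ x1.
    by exists a, b; rewrite !mem_cat aJ bJ.
  + by exists i, i; rewrite !mem_cat iJ; split => //; lia.
  + by exists (2 * i)%N, 1%N; rewrite !mem_cat oJ !inE eqxx /= orbT.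
- rewrite size_cat /=; lia.
Qed.

Lemma realizable_one (F : fieldType) n : realizable F n.+2 1.
Proof.
apply: (@real_chain F n.+1 [:: 1%N]) => //; try by move=> x; rewrite inE => /eqP ->.
Qed.

Local Close Scope ring_scope.

Theorem proposition4p10 (F : fieldType) (n b : nat) :
  (2 <= n)%N -> is_B F n b ->
  exists b', is_B F (n + 2) b' /\ (2 * b + 1 <= b')%N.
Proof.
move=> n2 [b0 Hb _]; rewrite addn2.
pose P b' := (0 < b')%N /\ (forall j, (1 <= j <= b')%N -> realizable F n.+2 j).
have P0 : P (2 * b + 1)%N.
  split; first lia.
  move=> j /andP [j1 jb].
  case: (eqVneq j 1%N) => [->|jn1]; first exact: realizable_one.
  have i1 : (1 <= j./2 <= b)%N by apply/andP; split; rewrite -divn2; [rewrite divn_gt0 //|]; lia.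
  have [Hd Hdo] := realizable_double n2 (Hb _ i1).
  have := odd_double_half j; rewrite -muln2; case: (odd j) => /= e.
    have ej : j = (2 * j./2 + 1)%N by rewrite -{1}e; lia.
    by rewrite ej.
  have ej : j = (2 * j./2)%N by rewrite -{1}e; lia.
  by rewrite ej.
have HN : forall y, P y -> (y <= 2 ^ n.+2)%N.
  move=> y [y0 Hy]; apply: (real_bound (m := n.+2)) => //.
  by apply: Hy; rewrite y0 leqnn.
have [z [[z0 Hz] lez maxz]] := max_exists P0 HN.
exists z; split => //; split => // b'' b''0 Hb''.
exact: maxz.
Qed.
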